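(* Let $A\in\mathcal{CP}_n$ have a unique CP representation $A=\sum_{i=1}^k\mathbf b_i\mathbf b_i^T$ (with $\mathbf b_i\in\mathbb R^n_+$). Then the minimal face of $\mathcal{CP}_n$ containing $A$ is the polyhedral cone \[\mathcal F^A_{\mathcal{CP}_n}=\operatorname{cone}\{\mathbf b_i\mathbf b_i^T : 1\le i\le k\}.\]
   Context: A symmetric $n\times n$ matrix $A$ is completely positive if $A=BB^T$ for some entrywise nonnegative matrix $B$; $\mathcal{CP}_n$ is the convex cone of $n\times n$ completely positive matrices. A CP representation of $A$ is an expression $A=\sum_{i=1}^k\mathbf b_i\mathbf b_i^T$ with $\mathbf b_i\ge\mathbf 0$ (equivalently a CP factorization $A=BB^T$ with columns $\mathbf b_i$); only representations with pairwise linearly independent $\mathbf b_i$ are considered, and representations differing only in the order of the summands are considered equal. A subcone $\mathcal F$ of a convex cone $\mathcal K$ is a face if $X,Y\in\mathcal K$ and $X+Y\in\mathcal F$ imply $X,Y\in\mathcal F$. The minimal face containing $A$ is the intersection of all faces of $\mathcal{CP}_n$ containing $A$. $\operatorname{cone}S$ denotes the set of all finite nonnegative linear combinations of elements of $S$. *)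

(* Defs.v *)
From HB Require Import structures.
From mathcomp Require Import all_boot all_order all_algebra.
From mathcomp Require Import reals.
Set Implicit Arguments. Unset Strict Implicit. Unset Printing Implicit Defensive.
Import Order.TTheory GRing.Theory Num.Theory.
Local Open Scope ring_scope.

Section CP.
Variables (R : realType) (n : nat).

Definition nonneg_mx (m p : nat) (B : 'M[R]_(m, p)) : Prop :=
  forall i j, 0 <= B i j.

Definition completely_positive (A : 'M[R]_n) : Prop :=
  exists (m : nat) (B : 'M[R]_(n, m)), nonneg_mx B /\ A = B *m B^T.

Definition lin_indep2 (u v : 'cV[R]_n) : Prop :=
  forall a c : R, a *: u + c *: v = 0 -> a = 0 /\ c = 0.

Definition cp_rep (A : 'M[R]_n) (bs : seq 'cV[R]_n) : Prop :=
  [/\ forall b, b \in bs -> nonneg_mx b,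
      forall b, b \in bs -> b != 0,
      forall i j, (i < size bs)%N -> (j < size bs)%N -> i <> j ->
        lin_indep2 (nth 0 bs i) (nth 0 bs j)
    & A = \sum_(b <- bs) b *m b^T].

Definition unique_cp_rep (A : 'M[R]_n) (bs : seq 'cV[R]_n) : Prop :=
  cp_rep A bs /\ forall bs', cp_rep A bs' -> perm_eq bs bs'.

Definition is_convex_cone (F : 'M[R]_n -> Prop) : Prop :=
  [/\ F 0,
      forall X Y, F X -> F Y -> F (X + Y)
    & forall (t : R) X, 0 <= t -> F X -> F (t *: X)].

Definition is_face_CP (F : 'M[R]_n -> Prop) : Prop :=
  [/\ is_convex_cone F,
      forall X, F X -> completely_positive X
    & forall X Y, completely_positive X -> completely_positive Y ->
        F (X + Y) -> F X /\ F Y].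

Definition minimal_face_CP (A : 'M[R]_n) (X : 'M[R]_n) : Prop :=
  forall F, is_face_CP F -> F A -> F X.

Definition cone_of (S : 'M[R]_n -> Prop) (X : 'M[R]_n) : Prop :=
  exists (k : nat) (v : 'I_k -> 'M[R]_n) (c : 'I_k -> R),
    [/\ forall i, S (v i), forall i, 0 <= c i & X = \sum_(i < k) c i *: v i].

End CP.

(* Main.v *)
Require Import Defs.
From HB Require Import structures.
From mathcomp Require Import all_boot all_order all_algebra.
From mathcomp Require Import reals.
From mathcomp Require Import ring lra.
From Stdlib Require Import Classical.
Import Order.TTheory GRing.Theory Num.Theory.
Local Open Scope ring_scope.

Set Implicit Arguments.
Section Aux.
Variables (R : realType) (n : nat).
Implicit Types (A X Y : 'M[R]_n) (bs : seq 'cV[R]_n) (b u v w : 'cV[R]_n).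

Lemma rank1Z (s : R) u : (s *: u) *m (s *: u)^T = s ^+ 2 *: (u *m u^T).
Proof.
apply/matrixP => i j; rewrite !mxE !big_ord1 !mxE; ring.
Qed.

Lemma mulmx_cols m (B : 'M[R]_(n, m)) :
  B *m B^T = \sum_(j < m) col j B *m (col j B)^T.
Proof.
apply/matrixP => i k; rewrite !mxE summxE; apply: eq_bigr => j _.
by rewrite !mxE big_ord1 !mxE.
Qed.

Lemma rank1_inj b b' : nonneg_mx b -> nonneg_mx b' ->
  b *m b^T = b' *m b'^T -> b = b'.
Proof.
move=> hb hb' h; apply/matrixP => i j.
have := congr1 (fun M : 'M[R]_n => M i i) h; rewrite !mxE !big_ord1 !mxE.
rewrite (ord1 j) -!expr2 => e; apply/eqP; rewrite -(@eqrXn2 _ 2) //; first by rewrite e.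
Qed.

Lemma cp0 : completely_positive (0 : 'M[R]_n).
Proof. exists 0%N, 0; split; first by move=> i []. by rewrite mul0mx. Qed.

Lemma cpD X Y : completely_positive X -> completely_positive Y ->
  completely_positive (X + Y).
Proof.
move=> [m1 [B1 [h1 ->]]] [m2 [B2 [h2 ->]]].
exists (m1 + m2)%N, (row_mx B1 B2); split.
  by move=> i j; rewrite mxE; case: (split j).
by rewrite tr_row_mx mul_row_col.
Qed.

Lemma cp_rank1 b : nonneg_mx b -> completely_positive (b *m b^T).
Proof. by move=> hb; exists 1%N, b. Qed.

Lemma cp_sum (ws : seq 'cV[R]_n) : (forall w, w \in ws -> nonneg_mx w) ->
  completely_positive (\sum_(w <- ws) w *m w^T).
Proof.
elim: ws => [|w ws IH] h; first by rewrite big_nil; exact: cp0.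
rewrite big_cons; apply: cpD; first by apply: cp_rank1; apply: h; rewrite inE eqxx.
by apply: IH => v hv; apply: h; rewrite inE hv orbT.
Qed.

Lemma cpZ t X : 0 <= t -> completely_positive X -> completely_positive (t *: X).
Proof.
move=> ht [m [B [hB ->]]]; exists m, (Num.sqrt t *: B); split.
  by move=> i j; rewrite mxE mulr_ge0 // sqrtr_ge0.
apply/matrixP => i j; rewrite !mxE big_distrr /=; apply: eq_bigr => k _.
have := sqr_sqrtr ht; set s := Num.sqrt t => <-; rewrite !mxE; ring.
Qed.

Lemma cone0 S : cone_of S (0 : 'M[R]_n).
Proof.
by exists 0%N, (fun _ => 0), (fun _ => 0); split; [case|case|rewrite big_ord0].
Qed.

Lemma coneD S X Y : cone_of S X -> cone_of S Y -> cone_of S (X + Y).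
Proof.
move=> [k1 [v1 [c1 [hv1 hc1 ->]]]] [k2 [v2 [c2 [hv2 hc2 ->]]]].
exists (k1 + k2)%N,
  (fun i => match split i with inl i1 => v1 i1 | inr i2 => v2 i2 end),
  (fun i => match split i with inl i1 => c1 i1 | inr i2 => c2 i2 end); split.
- by move=> i; case: (split i).
- by move=> i; case: (split i).
- rewrite big_split_ord /=; congr (_ + _); apply: eq_bigr => i _.
    by rewrite (unsplitK (inl _ i)).
  by rewrite (unsplitK (inr _ i)).
Qed.

Lemma coneZ S t X : 0 <= t -> cone_of S X -> cone_of S (t *: X).
Proof.
move=> ht [k [v [c [hv hc ->]]]]; exists k, v, (fun i => t * c i); split => //.
  by move=> i; rewrite mulr_ge0.
by rewrite scaler_sumr; apply: eq_bigr => i _; rewrite scalerA.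
Qed.

Lemma cone_in S (M : 'M[R]_n) : S M -> cone_of S M.
Proof.
by move=> h; exists 1%N, (fun _ => M), (fun _ => 1); split => //; rewrite big_ord1 scale1r.
Qed.

Lemma cone_sum S (I : Type) (r : seq I) (P : pred I) (F : I -> 'M[R]_n) :
  (forall i, P i -> cone_of S (F i)) -> cone_of S (\sum_(i <- r | P i) F i).
Proof.
move=> h; apply: (big_ind (cone_of S)) => //; [exact: cone0 | exact: coneD].
Qed.

Lemma face_rank1 F (ws : seq 'cV[R]_n) : is_face_CP F ->
  (forall w, w \in ws -> nonneg_mx w) ->
  F (\sum_(w <- ws) w *m w^T) -> forall w, w \in ws -> F (w *m w^T).
Proof.
move=> [_ _ hF]; elim: ws => [|w ws IH] hn //.
have hw : nonneg_mx w by apply: hn; rewrite inE eqxx.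
have hws : forall u, u \in ws -> nonneg_mx u.
  by move=> u hu; apply: hn; rewrite inE hu orbT.
rewrite big_cons => hs.
have [h1 h2] := hF _ _ (@cp_rank1 w hw) (@cp_sum ws hws) hs.
move=> v; rewrite inE => /predU1P [-> //| hv]; exact: IH hws h2 v hv.
Qed.

Lemma li_sym u v : lin_indep2 u v -> lin_indep2 v u.
Proof. by move=> h a c e; have := h c a; rewrite addrC => /(_ e) [-> ->]. Qed.

Lemma li_scaled u (m : R) : ~ lin_indep2 u (m *: u).
Proof.
move=> h; have [_] : m = 0 /\ -1 = 0 :> R by apply: h; rewrite scaleN1r subrr.
by move/eqP; rewrite oppr_eq0 oner_eq0.
Qed.

Lemma li_self u : ~ lin_indep2 u u.
Proof. by move=> h; apply: (@li_scaled u 1); rewrite scale1r. Qed.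

Lemma li_scale u v (m : R) : m != 0 -> lin_indep2 u v -> lin_indep2 (m *: u) v.
Proof.
move=> hm h a c e; have [h1 h2] : a * m = 0 /\ c = 0 by apply: h; rewrite -scalerA.
by split => //; move/eqP: h1; rewrite mulf_eq0 (negbTE hm) orbF => /eqP.
Qed.

Lemma not_li w b : ~ lin_indep2 w b -> b != 0 -> exists l, w = l *: b.
Proof.
move=> h hb; apply: NNPP => hne; apply: h => a c e.
have [a0|a0] := eqVneq a 0.
  move: e; rewrite a0 scale0r add0r => /eqP; rewrite scaler_eq0 (negbTE hb) orbF.
  by move/eqP.
exfalso; apply: hne; exists (- c / a).
apply: (scalerI a0); rewrite scalerA mulrCA divff // mulr1 scaleNr.
by apply/eqP; rewrite -subr_eq0 opprK; apply/eqP.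
Qed.

Definition cprep (A : 'M[R]_n) (bs : seq 'cV[R]_n) :=
  [/\ forall b, b \in bs -> nonneg_mx b, forall b, b \in bs -> b != 0, uniq bs,
      forall u v, u \in bs -> v \in bs -> u != v -> lin_indep2 u v
    & A = \sum_(b <- bs) b *m b^T].

Lemma cprepE A bs : cprep A bs -> cp_rep A bs.
Proof.
move=> [h1 h2 h3 h4 h5]; split => // i j hi hj hij.
apply: h4; try exact: mem_nth.
by rewrite nth_uniq //; apply/eqP.
Qed.

Lemma cp_rep_uniq A bs : cp_rep A bs -> uniq bs.
Proof.
move=> [_ _ h _]; apply/(uniqP 0) => i j hi hj e.
apply: NNPP => hij; have := h i j hi hj hij; rewrite e; exact: li_self.
Qed.

Lemma normalize (ws : seq 'cV[R]_n) : (forall w, w \in ws -> nonneg_mx w) ->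
  exists bs, cprep (\sum_(w <- ws) w *m w^T) bs /\
    forall w, w \in ws -> w != 0 -> exists2 b, b \in bs & exists l, w = l *: b.
Proof.
elim: ws => [|w ws IH] hn.
  exists [::]; split => //; split => //; by rewrite big_nil.
have hw : nonneg_mx w by apply: hn; rewrite inE eqxx.
have hws : forall u, u \in ws -> nonneg_mx u.
  by move=> u hu; apply: hn; rewrite inE hu orbT.
have [bs [[hnn hnz hu hli hsum] hmul]] := IH hws.
rewrite big_cons hsum.
have [->|wnz] := eqVneq w 0.
  exists bs; split; first by split => //; rewrite mul0mx add0r.
  move=> u; rewrite inE => /predU1P [-> | hu']; first by rewrite eqxx.
  exact: hmul.
case: (classic (exists2 b, b \in bs & ~ lin_indep2 w b)) => [[b hb hnli] | hall].
- have [l hl] := @not_li w b hnli (hnz b hb).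
  set mu := Num.sqrt (1 + l ^+ 2).
  have mu_gt0 : 0 < mu.
    by rewrite sqrtr_gt0; apply: (lt_le_trans ltr01); rewrite lerDl sqr_ge0.
  have mu0 : mu != 0 by rewrite gt_eqF.
  have hperm := perm_to_rem hb.
  have hbr : b \notin rem b bs by rewrite mem_rem_uniqF.
  have memr : forall v, v \in rem b bs -> v \in bs /\ v != b.
    move=> v hv; split; first by apply: mem_rem hv.
    by apply/eqP => e; move: hv; rewrite e (negbTE hbr).
  have memr' : forall v, v \in bs -> v != b -> v \in rem b bs.
    by move=> v hv hvb; rewrite (mem_rem_uniq _ hu) inE /= hvb.
  exists (mu *: b :: rem b bs); split.
    split.
    + move=> u; rewrite inE => /predU1P [-> | hu'].
        by move=> i j; rewrite mxE mulr_ge0 //; [exact: ltW | exact: (hnn b hb i j)].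
      by apply: hnn; case: (memr u hu').
    + move=> u; rewrite inE => /predU1P [-> | hu'].
        by rewrite scaler_eq0 negb_or mu0 hnz.
      by apply: hnz; case: (memr u hu').
    + rewrite /= rem_uniq // andbT; apply/negP => hin.
      have [hin1 hne] := memr _ hin.
      by apply: (@li_scaled b mu); apply: hli => //; rewrite eq_sym.
    + move=> u v; rewrite !inE => /predU1P [-> | hu'] /predU1P [-> | hv'].
      * by rewrite eqxx.
      * move=> _; have [hv1 hv2] := memr v hv'.
        by apply: li_scale => //; apply: hli => //; rewrite eq_sym.
      * move=> _; have [hu1 hu2] := memr u hu'; apply: li_sym.
        by apply: li_scale => //; apply: hli => //; rewrite eq_sym.
      * by move=> huv; apply: hli => //; [case: (memr u hu')|case: (memr v hv')].
    + rewrite (perm_big _ hperm) /= !big_cons hl !rank1Z sqr_sqrtr; last first.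
        by apply: (le_trans ler01); rewrite lerDl sqr_ge0.
      by rewrite scalerDl scale1r addrA (addrC (l ^+ 2 *: _)).
  move=> u; rewrite inE => /predU1P [-> _ | hu'].
    exists (mu *: b); first by rewrite inE eqxx.
    by exists (l / mu); rewrite hl scalerA divfK.
  move=> /(hmul u hu') [b' hb' [l' hl']].
  have [eb|neb] := eqVneq b' b.
    exists (mu *: b); first by rewrite inE eqxx.
    by exists (l' / mu); rewrite hl' eb scalerA divfK.
  exists b'; first by rewrite inE memr' ?orbT.
  by exists l'.
- have hall' : forall b, b \in bs -> lin_indep2 w b.
    by move=> b hb; apply: NNPP => hn'; apply: hall; exists b.
  exists (w :: bs); split.
    split.
    + by move=> u; rewrite inE => /predU1P [-> | hu'] //; apply: hnn.
    + by move=> u; rewrite inE => /predU1P [-> | hu'] //; apply: hnz.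
    + rewrite /= hu andbT; apply/negP => hin.
      exact: (@li_self w (hall' _ hin)).
    + move=> u v; rewrite !inE => /predU1P [-> | hu'] /predU1P [-> | hv'].
      * by rewrite eqxx.
      * by move=> _; apply: hall'.
      * by move=> _; apply: li_sym; apply: hall'.
      * by move=> huv; apply: hli.
    + by rewrite big_cons.
  move=> u; rewrite inE => /predU1P [-> _ | hu'].
    by exists w; [rewrite inE eqxx | exists 1; rewrite scale1r].
  move=> /(hmul u hu') [b' hb' [l' hl']].
  by exists b'; [rewrite inE hb' orbT | exists l'].
Qed.

End Aux.
Unset Implicit Arguments.

Theorem corollary5p2 (R : realType) (n : nat) (A : 'M[R]_n) (bs : seq 'cV[R]_n) :
  completely_positive A ->
  unique_cp_rep A bs ->
  forall X : 'M[R]_n,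
    minimal_face_CP A X <->
    cone_of (fun M : 'M[R]_n => exists2 b, b \in bs & M = b *m b^T) X.
Proof.
move=> _ [hrep huniq] X.
have [hnn hnz hli hA] := hrep.
have hu : uniq bs := cp_rep_uniq hrep.
set S := (fun M : 'M[R]_n => exists2 b, b \in bs & M = b *m b^T).
have coneCP : forall Y, cone_of S Y -> completely_positive Y.
  move=> Y [k [v [c [hv hc ->]]]].
  apply: (big_ind (@completely_positive R n)); [exact: cp0 | exact: cpD | ].
  move=> i _; apply: cpZ => //; have [b hb ->] := hv i; exact: cp_rank1 (hnn b hb).
have key : forall Y Z, completely_positive Y -> completely_positive Z ->
    cone_of S (Y + Z) -> cone_of S Y.
  move=> Y Z [m [B [hB ->]]] [m2 [B2 [hB2 ->]]] [k [v [c [hv hc hYZ]]]].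
  pose s := \sum_(i < k) c i.
  have s0 : 0 <= s by apply: sumr_ge0 => i _.
  pose t := (1 + s)^-1.
  have s1 : 0 < 1 + s by apply: (lt_le_trans ltr01); rewrite lerDl.
  have t0 : 0 < t by rewrite invr_gt0.
  have ts : t * (1 + s) = 1 by rewrite mulVf // gt_eqF.
  pose d := fun b : 'cV[R]_n => \sum_(i < k) (if v i == b *m b^T then c i else 0).
  have d0 : forall b, 0 <= d b by move=> b; apply: sumr_ge0 => i _; case: ifP.
  have ds : forall b, d b <= s by move=> b; apply: ler_sum => i _; case: ifP.
  have td : forall b, 0 <= 1 - t * d b.
    move=> b; have := ler_wpM2l (ltW t0) (ds b); move: ts; rewrite mulrDr mulr1.
    move: t0; set x := t * s; set y := t * d b; lra.
  have hreg : \sum_(i < k) c i *: v i = \sum_(b <- bs) d b *: (b *m b^T).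
    rewrite /d /=; under [RHS]eq_bigr do rewrite scaler_suml.
    rewrite exchange_big /=; apply: eq_bigr => i _.
    have [b hb hvb] := hv i.
    rewrite (bigD1_seq b hb hu) /= hvb eqxx big1_seq ?addr0 // => b' /andP [hne hb'].
    case: eqP => [e|_]; last by rewrite scale0r.
    have eb := rank1_inj (hnn b hb) (hnn b' hb') e.
    by rewrite eb eqxx in hne.
  pose st := Num.sqrt t.
  have st2 : st ^+ 2 = t by rewrite sqr_sqrtr // ltW.
  pose ws := [seq st *: col j B | j <- index_enum 'I_m] ++
             [seq st *: col j B2 | j <- index_enum 'I_m2] ++
             [seq Num.sqrt (1 - t * d b) *: b | b <- bs].
  have hwsn : forall w, w \in ws -> nonneg_mx w.
    move=> w; rewrite !mem_cat => /or3P [] /mapP [j hj ->] i l; rewrite !mxE;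
      apply: mulr_ge0; rewrite ?sqrtr_ge0 //.
    exact: (hnn j hj i l).
  have h1 : forall mm (BB : 'M[R]_(n, mm)),
      \sum_(j <- index_enum 'I_mm) (st *: col j BB) *m (st *: col j BB)^T
      = t *: (BB *m BB^T).
    move=> mm BB; rewrite mulmx_cols scaler_sumr; apply: eq_bigr => j _.
    by rewrite rank1Z st2.
  have h3 : \sum_(b <- bs) (Num.sqrt (1 - t * d b) *: b) *m (Num.sqrt (1 - t * d b) *: b)^T
      = A - t *: (B *m B^T + B2 *m B2^T).
    rewrite (eq_bigr (fun b => b *m b^T - t *: (d b *: (b *m b^T)))); last first.
      by move=> b _; rewrite rank1Z sqr_sqrtr // scalerBl scale1r scalerA.
    by rewrite sumrB -scaler_sumr -hreg -hYZ -hA.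
  have hwsA : \sum_(w <- ws) w *m w^T = A.
    rewrite !big_cat !big_map /= h1 h1 h3 scalerDr.
    by rewrite addrA addrC subrK.
  have [bs' [hrep' hmul]] := @normalize R n ws hwsn.
  rewrite hwsA in hrep'.
  have hperm := huniq _ (cprepE hrep').
  rewrite mulmx_cols; apply: cone_sum => j _.
  have [->|hnz'] := eqVneq (col j B) 0; first by rewrite mul0mx; exact: cone0.
  have st0 : st != 0 by rewrite gt_eqF // sqrtr_gt0.
  have hin : st *: col j B \in ws.
    by rewrite mem_cat; apply/orP; left; apply/mapP; exists j; rewrite ?mem_index_enum.
  have hne : st *: col j B != 0 by rewrite scaler_eq0 negb_or st0 hnz'.
  have [b' hb' [l hl]] := hmul _ hin hne.
  have hb : b' \in bs by rewrite (perm_mem hperm).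
  have -> : col j B = (l / st) *: b'.
    by apply: (scalerI st0); rewrite hl scalerA mulrC divfK.
  rewrite rank1Z; apply: coneZ; first exact: sqr_ge0.
  by apply: cone_in; exists b'.
split.
- move=> hX; apply: hX.
  + split.
    * split; [exact: cone0 | exact: coneD | move=> t Y ht; exact: coneZ].
    * exact: coneCP.
    * move=> Y Z hY hZ hYZ; split; first exact: key hY hZ hYZ.
      by apply: (key Z Y) => //; rewrite addrC.
  + rewrite hA big_seq; apply: cone_sum => b hb; apply: cone_in; by exists b.
- move=> [k [v [c [hv hc ->]]]] F hF hFA.
  have hfb : forall b, b \in bs -> F (b *m b^T).
    by move=> b hb; apply: (@face_rank1 R n F bs hF hnn) => //; rewrite -hA.
  have [[F0 FD FZ] _ _] := hF.
  apply: (big_ind F) => // i _; apply: FZ => //; have [b hb ->] := hv i; exact: hfb.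
Qed.
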